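(* Let $i\ge 1$ be an integer and $k\ge 10i+35$. Let $H$ be a weighted graph with edge weight $\omega:E(H)\to\{3,4,5\}$ which contains no cycle of odd weight smaller than $2k+1$. Let $B_1,B_2$ be sets of vertices of $H$ with $d(B_1,B_2)\ge 2i+2$, and let $P$ be a path of minimal weight among all paths between $B_1$ and $B_2$. If $N^{3i+1}[B_1]$ and $N^{3i+1}[B_2]$ are weighted bipartite, then $N^i[B_1\cup B_2\cup P]$ is weighted bipartite.
   Context: The weight of a subgraph is the sum of the weights of its edges. $d(B_1,B_2)$ is the unweighted distance, i.e. the minimum number of edges of a path between a vertex of $B_1$ and a vertex of $B_2$. $N^j[S]$ is the set of vertices at unweighted distance at most $j$ from some vertex of $S$ (for a path, of its vertex set). A vertex set $S$ is weighted bipartite if $H[S]$ contains no cycle of odd weight. *)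

(* Defs.v *)
From mathcomp Require Import all_boot.
Set Implicit Arguments. Unset Strict Implicit. Unset Printing Implicit Defensive.

Section Defs.
Variable T : finType.
Variable e : rel T.
Variable w : T -> T -> nat.       (* edge weight omega, read on adjacent pairs *)

Definition simple_graph : Prop := symmetric e /\ irreflexive e.

Definition weight_345 : Prop :=
  forall x y, e x y -> w x y = w y x /\ w x y \in [:: 3; 4; 5].

Definition is_path (x : T) (p : seq T) : Prop := path e x p /\ uniq (x :: p).

Definition path_weight (x : T) (p : seq T) : nat :=
  \sum_(pr <- zip (x :: p) p) w pr.1 pr.2.

Definition is_cycle (c : seq T) : Prop := 3 <= size c /\ uniq c /\ cycle e c.

Definition cycle_weight (c : seq T) : nat := \sum_(x <- c) w x (next c x).

(* cycle contained in the induced subgraph H[S] *)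
Definition cycle_in (S : T -> Prop) (c : seq T) : Prop := forall x, x \in c -> S x.

Definition weighted_bipartite (S : T -> Prop) : Prop :=
  forall c, is_cycle c -> cycle_in S c -> ~~ odd (cycle_weight c).

(* N^j[S]: vertices at unweighted distance at most j from some vertex of S *)
Definition nbhd (j : nat) (S : T -> Prop) (v : T) : Prop :=
  exists s, S s /\ exists p, path e s p /\ last s p = v /\ size p <= j.

Definition dist_ge (B1 B2 : {set T}) (m : nat) : Prop :=
  forall x p, x \in B1 -> is_path x p -> last x p \in B2 -> m <= size p.

Definition min_weight_path (B1 B2 : {set T}) (x : T) (p : seq T) : Prop :=
  [/\ x \in B1, is_path x p, last x p \in B2 &
      forall y q, y \in B1 -> is_path y q -> last y q \in B2 ->
        path_weight x p <= path_weight y q].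

End Defs.

(* Main.v *)
Require Import Defs.
From mathcomp Require Import all_boot zify.
From Stdlib Require Import ClassicalEpsilon.
Set Implicit Arguments. Unset Strict Implicit. Unset Printing Implicit Defensive.

Section Basic.
Variable T : finType.
Variable e : rel T.
Variable w : T -> T -> nat.

Local Notation pw := (path_weight w).

Lemma pw_nil x : pw x [::] = 0.
Proof. by rewrite /path_weight big_nil. Qed.

Lemma pw_cons x y p : pw x (y :: p) = w x y + pw y p.
Proof. by rewrite /path_weight /= big_cons. Qed.

Lemma pw_cat x p q : pw x (p ++ q) = pw x p + pw (last x p) q.
Proof.
elim: p x => [|y p IH] x /=; first by rewrite pw_nil.
by rewrite !pw_cons IH addnA.
Qed.

Lemma pw_rcons x p y : pw x (rcons p y) = pw x p + w (last x p) y.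
Proof. by rewrite -cats1 pw_cat pw_cons pw_nil addn0. Qed.

Lemma rev_walk (x : T) (p : seq T) : rev (x :: p) = last x p :: rev (belast x p).
Proof. by rewrite -rev_rcons -lastI. Qed.

Lemma pw_rev x p :
  (forall a b, e a b -> w a b = w b a) -> path e x p ->
  pw (last x p) (rev (belast x p)) = pw x p.
Proof.
move=> Hs; elim: p x => [|y p IH] x /=; first by rewrite !pw_nil.
case/andP=> exy Hp.
have L : last (last y p) (rev (belast y p)) = y.
  have: last y (rev (y :: p)) = y by rewrite rev_cons last_rcons.
  by rewrite rev_walk.
by rewrite rev_cons pw_rcons IH // pw_cons L (Hs _ _ exy) addnC.
Qed.

Lemma pw_bounds x p :
  (forall a b, e a b -> 3 <= w a b <= 5) -> path e x p ->
  3 * size p <= pw x p <= 5 * size p.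
Proof.
move=> Hb; elim: p x => [|y p IH] x /=; first by rewrite pw_nil.
case/andP=> exy Hp; rewrite pw_cons.
have := Hb _ _ exy; have := IH _ Hp. lia.
Qed.

Lemma in_split (x : T) (s : seq T) : x \in s -> exists q1 q2, s = q1 ++ x :: q2.
Proof. by case/splitPr => q1 q2; exists q1, q2. Qed.

Lemma nonuniq_dec (x : T) (p : seq T) : ~~ uniq (x :: p) ->
  exists p1 p2 p3 z, [/\ p = p1 ++ p2 ++ p3, last x p1 = z, last z p2 = z & p2 != [::]].
Proof.
elim: p x => [|y p IH] x //=.
rewrite negb_and negbK; case/orP.
  move=> /in_split [q1 [q2 E]].
  exists [::], (rcons q1 x), q2, x; rewrite E -cats1 -catA /= last_cat /=.
  by split => //; case: q1 {E}.
move=> nu; have [p1 [p2 [p3 [z [E1 E2 E3 E4]]]]] := IH y nu.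
by exists (y :: p1), p2, p3, z; rewrite E1.
Qed.

Lemma shorten_walk x p : path e x p ->
  exists q, [/\ path e x q, uniq (x :: q), last x q = last x p,
                pw x q <= pw x p & (size q <= size p) /\ {subset x :: q <= x :: p}].
Proof.
move: {2}(size p) (leqnn (size p)) => n; elim: n x p => [|n IH] x p.
  by rewrite leqn0 => /nilP -> _; exists [::]; do !split.
case: (boolP (uniq (x :: p))) => [u _ Hp|nu Hs Hp].
  by exists p; do !split.
have [p1 [p2 [p3 [z [E1 E2 E3 E4]]]]] := nonuniq_dec nu.
have Hp' : path e x (p1 ++ p3).
  move: Hp; rewrite E1 !cat_path E2 E3.
  by case/and3P => -> _ ->.
have sz : size (p1 ++ p3) <= n.
  move: Hs; rewrite E1 !size_cat; have : size p2 != 0 by rewrite size_eq0. lia.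
have [q [Q1 Q2 Q3 Q4 [Q5 Q6]]] := IH x (p1 ++ p3) sz Hp'.
exists q; split => //.
- by rewrite Q3 E1 !last_cat E2 E3.
- apply: leq_trans Q4 _; rewrite E1 !pw_cat ?last_cat E2 ?E3; lia.
- split.
    apply: leq_trans Q5 _; rewrite E1 !size_cat; lia.
  move=> v /Q6; rewrite E1 !inE !mem_cat => /orP[->//|/orP[->|->]];
  by rewrite ?orbT.
Qed.

End Basic.

Section Cyc.
Variable T : finType.
Variable e : rel T.
Variable w : T -> T -> nat.

Local Notation pw := (path_weight w).

Lemma sum_zip_map (c : seq T) (g : T -> T) :
  \sum_(y <- c) w y (g y) = \sum_(pr <- zip c (map g c)) w pr.1 pr.2.
Proof. by elim: c => [|y c IH]; rewrite ?big_nil // /= !big_cons IH. Qed.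

Lemma map_next_uniq (x : T) s : uniq (x :: s) -> map (next (x :: s)) (x :: s) = rcons s x.
Proof.
move=> u; apply: (@eq_from_nth _ x); first by rewrite size_map size_rcons.
move=> k; rewrite size_map => hk.
rewrite (nth_map x) // next_nth mem_nth // index_uniq // nth_rcons.
move: hk => /= hk; case: ltngtP => //; try lia.
by move=> ->; rewrite nth_default.
Qed.

Lemma cycle_weight_pw (x : T) s : uniq (x :: s) ->
  cycle_weight w (x :: s) = pw x (rcons s x).
Proof.
move=> u; rewrite /cycle_weight sum_zip_map map_next_uniq //.
rewrite /path_weight.
have -> : zip (x :: rcons s x) (rcons s x) = zip (x :: s) (rcons s x); last by [].
rewrite -[x :: rcons s x]/(rcons (x::s) x) -cats1.
by rewrite -[in LHS](cats0 (rcons s x)) zip_cat ?size_rcons //= cats0.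
Qed.

Hypothesis Hirr : irreflexive e.
Hypothesis Hws : forall a b, e a b -> w a b = w b a.

Lemma closed_odd_cycle x p : path e x p -> last x p = x -> odd (pw x p) ->
  exists c, [/\ is_cycle e c, {subset c <= x :: p}, odd (cycle_weight w c)
              & cycle_weight w c <= pw x p].
Proof.
move: {2}(size p) (leqnn (size p)) => n; elim: n x p => [|n IH] x p.
  by rewrite leqn0 => /nilP -> _ _; rewrite pw_nil.
move=> Hs; case/lastP: p Hs => [|p' y]; first by rewrite pw_nil.
rewrite last_rcons => Hs Hp Ey; subst y.
case: (boolP (uniq (x :: p'))) => [u|nu].
  case: p' u Hs Hp => [|y [|y' p'']] u Hs Hp.
  - by move: Hp => /=; rewrite Hirr.
  - move: Hp => /= /andP[exy _]; rewrite !pw_cons pw_nil (Hws exy) addn0 addnn odd_double.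
    done.
  - move=> Ho; exists [:: x, y, y' & p'']; split.
    + by split => //; split.
    + move=> v Hv; rewrite in_cons mem_rcons in_cons; move: Hv.
      by rewrite in_cons => /orP[->|->]; rewrite ?orbT.
    + by rewrite cycle_weight_pw.
    + by rewrite cycle_weight_pw.
have [p1 [p2 [p3 [z [E1 E2 E3 E4]]]]] := nonuniq_dec nu.
subst p'.
have Hw : pw x (rcons (p1 ++ p2 ++ p3) x) = pw x (p1 ++ rcons p3 x) + pw z p2.
  by rewrite -!cats1 -!catA !pw_cat ?last_cat E2 ?E3 /=; lia.
rewrite -!cats1 -!catA !cat_path E2 E3 in Hp; case/and3P: Hp => H1 H2 H3.
have sp2 : 0 < size p2 by rewrite lt0n size_eq0.
rewrite Hw oddD; case: (boolP (odd (pw z p2))) => Ho2 Ho.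
- have := IH z p2; case.
  + move: Hs; rewrite !size_rcons !size_cat; lia.
  + done.
  + done.
  + done.
  move=> c [C1 C2 C3 C4]; exists c; split => //.
    move=> v /C2; rewrite in_cons => /orP[/eqP->|Hv].
      rewrite -E2; have := mem_last x p1.
      by rewrite !in_cons mem_rcons in_cons !mem_cat => /orP[->|->]; rewrite ?orbT.
    by rewrite in_cons mem_rcons in_cons !mem_cat Hv !orbT.
  rewrite -cats1 -catA in Hw; lia.
- rewrite addbF in Ho.
  have := IH x (p1 ++ rcons p3 x); case.
  + move: Hs; rewrite !size_cat !size_rcons !size_cat; lia.
  + by rewrite cat_path H1 E2 rcons_path; move: H3 => /andP[-> /andP[->]].
  + by rewrite last_cat last_rcons.
  + done.
  move=> c [C1 C2 C3 C4]; exists c; split => //.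
    move=> v /C2; rewrite !in_cons !mem_cat ?mem_rcons ?in_cons ?mem_cat.
    by case: (v == x); case: (v \in p1); case: (v \in p2); case: (v \in p3).
  rewrite -cats1 -catA in Hw; lia.
Qed.

End Cyc.

Section Pot.
Variable T : finType.
Variable e : rel T.
Variable w : T -> T -> nat.

Local Notation pw := (path_weight w).

Hypothesis Hsym : symmetric e.
Hypothesis Hirr : irreflexive e.
Hypothesis Hws : forall a b, e a b -> w a b = w b a.

Lemma last_rev_walk (x : T) p : last (last x p) (rev (belast x p)) = x.
Proof.
have: last x (rev (x :: p)) = x by rewrite rev_cons last_rcons.
by rewrite rev_walk.
Qed.

Lemma rev_path_sym (x : T) p : path e x p -> path e (last x p) (rev (belast x p)).
Proof.
rewrite rev_path; apply: sub_path => a b /=; by rewrite Hsym.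
Qed.

Lemma mem_rev_walk (x : T) p v : (v \in last x p :: rev (belast x p)) = (v \in x :: p).
Proof. by rewrite -rev_walk mem_rev. Qed.

Lemma closed_even (Q : T -> Prop) x p : weighted_bipartite e w Q ->
  path e x p -> last x p = x -> (forall v, v \in x :: p -> Q v) -> ~~ odd (pw x p).
Proof.
move=> Hb Hp Hl HQ; apply/negP => Ho.
have [c [C1 C2 C3 C4]] := closed_odd_cycle Hirr Hws Hp Hl Ho.
by move: (Hb c C1 (fun v hv => HQ v (C2 v hv))); rewrite C3.
Qed.

Lemma closed_even_short (k : nat) x p :
  (forall c, is_cycle e c -> odd (cycle_weight w c) -> 2 * k + 1 <= cycle_weight w c) ->
  path e x p -> last x p = x -> pw x p <= 2 * k -> ~~ odd (pw x p).
Proof.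
move=> Hc Hp Hl Hle; apply/negP => Ho.
have [c [C1 C2 C3 C4]] := closed_odd_cycle Hirr Hws Hp Hl Ho.
have := Hc c C1 C3; lia.
Qed.

(* two walks with same ends: parity, via closed walk *)
Lemma walk_pair_parity (Q : T -> Prop) a q1 q2 : weighted_bipartite e w Q ->
  path e a q1 -> path e a q2 -> last a q1 = last a q2 ->
  (forall v, v \in a :: q1 -> Q v) -> (forall v, v \in a :: q2 -> Q v) ->
  odd (pw a q1) = odd (pw a q2).
Proof.
move=> Hb P1 P2 El H1 H2.
have Hc : ~~ odd (pw a (q1 ++ rev (belast a q2))).
  apply: (closed_even Hb).
- by rewrite cat_path P1 El rev_path_sym.
- by rewrite last_cat El last_rev_walk.
- move=> v; rewrite in_cons mem_cat => /orP[/eqP->|/orP[Hv|Hv]].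
  + by apply: H1; rewrite mem_head.
  + by apply: H1; rewrite in_cons Hv orbT.
  + apply: H2; rewrite -mem_rev_walk in_cons Hv orbT //.
move: Hc; rewrite pw_cat El (pw_rev Hws P2) oddD.
by case: (odd (pw a q1)); case: (odd (pw a q2)).
Qed.

Definition qb (Q : T -> Prop) v : bool := if excluded_middle_informative (Q v) then true else false.
Lemma qbP (Q : T -> Prop) v : qb Q v <-> Q v.
Proof. by rewrite /qb; case: excluded_middle_informative. Qed.

Definition eQ (Q : T -> Prop) : rel T := fun u v => [&& e u v, qb Q u & qb Q v].

Lemma eQ_sym Q : symmetric (eQ Q).
Proof. by move=> u v; rewrite /eQ Hsym; case: (e v u); case: (qb Q u); case: (qb Q v). Qed.

Lemma eQ_path_e Q x p : path (eQ Q) x p -> path e x p.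
Proof. by apply: sub_path => u v /and3P[]. Qed.

Lemma eQ_path_mem Q x p : path (eQ Q) x p -> Q x -> forall v, v \in x :: p -> Q v.
Proof.
elim: p x => [|y p IH] x /=.
  by move=> _ Hx v; rewrite inE => /eqP->.
case/andP=> /and3P[_ _ /qbP Hy] Hp Hx v; rewrite in_cons => /orP[/eqP->//|].
exact: IH.
Qed.

Lemma e_path_eQ Q x p : path e x p -> (forall v, v \in x :: p -> Q v) -> path (eQ Q) x p.
Proof.
elim: p x => [|y p IH] x //=.
case/andP=> exy Hp HQ; rewrite IH // ?andbT.
  rewrite /eQ exy /=; apply/andP; split; apply/qbP; apply: HQ;
  by rewrite !in_cons eqxx ?orbT.
by move=> v hv; apply: HQ; rewrite in_cons hv orbT.
Qed.

Lemma root_Q Q v : Q v -> Q (root (eQ Q) v).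
Proof.
move=> Hv.
have /connectP [q Pq Eq] := connect_root (eQ Q) v.
case: q Pq Eq => [|y q] /=; first by move=> _ ->.
case/andP=> /and3P[_ _ /qbP Hy] Pq ->; apply: (eQ_path_mem Pq Hy); exact: mem_last.
Qed.

End Pot.

Section Pot2.
Variable T : finType.
Variable e : rel T.
Variable w : T -> T -> nat.
Local Notation pw := (path_weight w).
Hypothesis Hsym : symmetric e.
Hypothesis Hirr : irreflexive e.
Hypothesis Hws : forall a b, e a b -> w a b = w b a.

Definition phiQ (Q : T -> Prop) v : bool :=
  let r := root (eQ e Q) v in
  if excluded_middle_informative
       (exists q, [/\ path (eQ e Q) r q, last r q = v & odd (pw r q)])
  then true else false.

Lemma phiQ_eq Q v q : weighted_bipartite e w Q -> Q v ->
  path (eQ e Q) (root (eQ e Q) v) q -> last (root (eQ e Q) v) q = v ->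
  phiQ Q v = odd (pw (root (eQ e Q) v) q).
Proof.
move=> Hb Hv Pq Lq; rewrite /phiQ; case: excluded_middle_informative.
  case=> q' [P' L' O']; rewrite -O'.
  have Qr := root_Q e Hv.
  apply: (walk_pair_parity Hsym Hirr Hws Hb (eQ_path_e P') (eQ_path_e Pq)).
  - by rewrite L' Lq.
  - exact: eQ_path_mem P' Qr.
  - exact: eQ_path_mem Pq Qr.
case: (boolP (odd _)) => // Ho N; exfalso; apply: N; by exists q; split.
Qed.

Lemma potential Q : weighted_bipartite e w Q ->
  exists phi : T -> bool, forall x p, path e x p -> (forall v, v \in x :: p -> Q v) ->
    odd (pw x p) = phi x (+) phi (last x p).
Proof.
move=> Hb; exists (phiQ Q) => x p Hp HQ.
have Qx : Q x by apply: HQ; rewrite mem_head.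
have Qy : Q (last x p) by apply: HQ; rewrite mem_last.
have Pe := e_path_eQ Hp HQ.
have cs := sym_connect_sym (@eQ_sym _ e Hsym Q).
have Cxy : connect (eQ e Q) x (last x p) by apply/connectP; exists p.
have Er : root (eQ e Q) x = root (eQ e Q) (last x p) by apply/(rootP cs).
have : connect (eQ e Q) (root (eQ e Q) x) x by rewrite cs connect_root.
case/connectP => q1 P1 L1.
have : connect (eQ e Q) (root (eQ e Q) (last x p)) (last x p) by rewrite cs connect_root.
case/connectP => q2 P2 L2.
rewrite (phiQ_eq Hb Qx P1 (esym L1)) (phiQ_eq Hb Qy P2 (esym L2)).
have Qr := root_Q e Qx.
have Hpar : odd (pw (root (eQ e Q) x) (q1 ++ p)) = odd (pw (root (eQ e Q) x) q2).
  apply: (@walk_pair_parity _ e w Hsym Hirr Hws Q _ _ _ Hb).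
  - by rewrite cat_path (eQ_path_e P1) -L1 Hp.
  - by rewrite Er; exact: eQ_path_e P2.
  - by rewrite last_cat -L1 Er -L2.
  - move=> v; rewrite in_cons mem_cat orbA => /orP[Hv|Hv].
      by apply: (eQ_path_mem P1 Qr); rewrite in_cons.
    by apply: HQ; rewrite in_cons Hv orbT.
  - rewrite Er in Qr *; exact: eQ_path_mem P2 Qr.
rewrite {2}Er pw_cat -L1 oddD in Hpar; rewrite -Hpar.
by case: (odd (pw x p)); case: (odd _).
Qed.

End Pot2.

Section Walks.
Variable T : finType.
Variable e : rel T.
Variable w : T -> T -> nat.
Local Notation pw := (path_weight w).
Hypothesis Hsym : symmetric e.

Lemma split_at (r : T) Q v : v \in r :: Q -> exists Q1 Q2, Q = Q1 ++ Q2 /\ last r Q1 = v.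
Proof.
rewrite in_cons => /orP[/eqP->|]; first by exists [::], Q.
case/in_split => q1 [q2 ->]; exists (rcons q1 v), q2.
by rewrite cat_rcons last_rcons.
Qed.

Lemma walk_nbhd (B : {set T}) j s q : s \in B -> path e s q -> size q <= j ->
  nbhd e j (fun u => u \in B) (last s q).
Proof. by move=> Hs Hp Hz; exists s; split => //; exists q. Qed.

Lemma rev_nbhd (B : {set T}) j v q : last v q \in B -> path e v q -> size q <= j ->
  nbhd e j (fun u => u \in B) v.
Proof.
move=> Hs Hp Hz; exists (last v q); split => //; exists (rev (belast v q)).
split; first exact (rev_path_sym Hsym Hp).
by rewrite last_rev_walk size_rev size_belast.
Qed.

Lemma X_in_nbhd (B : {set T}) j z X : path e z X -> last z X \in B -> size X <= j ->
  forall v, v \in z :: X -> nbhd e j (fun u => u \in B) v.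
Proof.
move=> Hp Hl Hz v /split_at [X1 [X2 [E L]]].
subst X; move: Hp; rewrite cat_path L => /andP[_ H2].
apply: (rev_nbhd (q := X2)) => //.
  by move: Hl; rewrite last_cat L.
by move: Hz; rewrite size_cat; lia.
Qed.

Lemma common_prefix (A1 A2 C1 C2 : seq T) : A1 ++ A2 = C1 ++ C2 -> size A1 <= size C1 ->
  exists M, C1 = A1 ++ M /\ A2 = M ++ C2.
Proof.
elim: A1 C1 => [|a A1 IH] C1 /=; first by move=> ->; exists C1.
case: C1 => [|c C1] //= [-> E] Hs.
by have [M [-> ->]] := IH C1 E Hs; exists M.
Qed.

Lemma take_index_split (x : T) p A1 A2 : uniq (x :: p) -> p = A1 ++ A2 ->
  take (index (last x A1) (x :: p)) p = A1.
Proof.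
move=> U E.
have E' : x :: p = belast x A1 ++ last x A1 :: A2.
  by rewrite E -cat_cons lastI cat_rcons.
have nin : last x A1 \notin belast x A1.
  by move: U; rewrite E' cat_uniq => /and3P[_ /= H _]; move: H; rewrite negb_or => /andP[].
rewrite E' index_pivot // size_belast E take_size_cat //.
Qed.

End Walks.

Section SideSec.
Variable T : finType.
Variable e : rel T.
Variable w : T -> T -> nat.
Local Notation pw := (path_weight w).
Hypothesis Hsym : symmetric e.
Hypothesis Hwb : forall a b, e a b -> 3 <= w a b <= 5.
Variable i : nat.

Lemma side (B : {set T}) (phiB : T -> bool) :
  (forall a q, path e a q -> (forall v, v \in a :: q -> nbhd e (3 * i + 1) (fun u => u \in B) v) ->
     odd (pw a q) = phiB a (+) phiB (last a q)) ->
  forall r Q z X b, r \in B -> path e r Q -> last r Q = z -> path e z X -> last z X = b ->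
  b \in B -> size X <= 2 * i + 1 -> pw r Q <= pw z X ->
  odd (pw r Q + pw z X) = phiB r (+) phiB b.
Proof.
move=> HphiB r Q z X b Hr PQ LQ PX LX Hb SX Hle.
have := pw_bounds Hwb PQ; have := pw_bounds Hwb PX => /andP[_ b1] /andP[b2 _].
have Hm : size Q <= 4 * i + 2 by lia.
rewrite -LX -LQ -pw_cat -last_cat; apply: HphiB.
  by rewrite cat_path PQ LQ PX.
move=> v; rewrite in_cons mem_cat orbA => /orP[Hv|Hv].
- have [Q1 [Q2 [EQ LQ1]]] := split_at Hv.
  move: PQ; rewrite EQ cat_path LQ1 => /andP[P1 P2].
  case: (leqP (size Q1) (3 * i + 1)) => Hs.
    by rewrite -LQ1; apply: walk_nbhd.
  apply: (@rev_nbhd _ _ Hsym B _ v (Q2 ++ X)).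
  - rewrite last_cat; have -> : last v Q2 = z by rewrite -LQ EQ last_cat LQ1.
    by rewrite LX.
  - rewrite cat_path P2; have -> : last v Q2 = z by rewrite -LQ EQ last_cat LQ1.
    by [].
    
  - move: Hm SX Hs; rewrite EQ !size_cat; lia.
- apply: (@X_in_nbhd _ _ Hsym B (3 * i + 1) z X) => //.
  + by rewrite LX.
  + lia.
  + by rewrite in_cons Hv orbT.
Qed.

End SideSec.

Lemma ar1 i n : n <= 2 * i + 1 -> n <= 3 * i + 1.
Proof. lia. Qed.
Lemma ar2 i n : 2 * i + 2 <= n -> n <= 2 * i + 1 -> False.
Proof. lia. Qed.

Lemma ar3 i a b : a <= i -> b <= i -> a.+1 + b <= 2 * i + 1.
Proof. lia. Qed.

Section Main.
Variable T : finType.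
Variable e : rel T.
Variable w : T -> T -> nat.
Local Notation pw := (path_weight w).
Variables (i k : nat) (B1 B2 : {set T}) (x : T) (p : seq T).
Hypothesis Hsym : symmetric e.
Hypothesis Hirr : irreflexive e.
Hypothesis Hws : forall a b, e a b -> w a b = w b a.
Hypothesis Hwb : forall a b, e a b -> 3 <= w a b <= 5.
Hypothesis Hk : 10 * i + 35 <= k.
Hypothesis Hcyc : forall c, is_cycle e c -> odd (cycle_weight w c) -> 2 * k + 1 <= cycle_weight w c.
Hypothesis Hdist : dist_ge e B1 B2 (2 * i + 2).
Hypothesis Hx : x \in B1.
Hypothesis HP : path e x p.
Hypothesis HU : uniq (x :: p).
Hypothesis Hy : last x p \in B2.
Hypothesis Hmin : forall y q, y \in B1 -> is_path e y q -> last y q \in B2 -> pw x p <= pw y q.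
Variables phi1 phi2 : T -> bool.
Hypothesis Hphi1 : forall a q, path e a q ->
  (forall v, v \in a :: q -> nbhd e (3 * i + 1) (fun u => u \in B1) v) ->
  odd (pw a q) = phi1 a (+) phi1 (last a q).
Hypothesis Hphi1x : phi1 x = false.
Hypothesis Hphi2 : forall a q, path e a q ->
  (forall v, v \in a :: q -> nbhd e (3 * i + 1) (fun u => u \in B2) v) ->
  odd (pw a q) = phi2 a (+) phi2 (last a q).
Hypothesis Hphi2y : phi2 (last x p) = odd (pw x p).

Lemma MinW y q : y \in B1 -> path e y q -> last y q \in B2 -> pw x p <= pw y q.
Proof.
move=> H1 Hq H2; have [q' [Q1 Q2 Q3 Q4 _]] := shorten_walk w Hq.
apply: leq_trans Q4; apply: Hmin; [done | by split | by rewrite Q3].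
Qed.

Lemma DistW y q : y \in B1 -> path e y q -> last y q \in B2 -> 2 * i + 2 <= size q.
Proof.
move=> H1 Hq H2; have [q' [Q1 Q2 Q3 Q4 [Q5 _]]] := shorten_walk w Hq.
apply: leq_trans Q5; apply: (Hdist H1); [by split | by rewrite Q3].
Qed.

Definition phiP v := odd (pw x (take (index v (x :: p)) p)).

Lemma phiP_split A1 A2 : p = A1 ++ A2 -> phiP (last x A1) = odd (pw x A1).
Proof. by move=> E; rewrite /phiP (take_index_split HU E). Qed.

Lemma rev_walk_props a X : path e a X ->
  [/\ path e (last a X) (rev (belast a X)), last (last a X) (rev (belast a X)) = a,
      size (rev (belast a X)) = size X & pw (last a X) (rev (belast a X)) = pw a X].
Proof.
move=> H; split.
- exact (rev_path_sym Hsym H).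
- exact: last_rev_walk.
- by rewrite size_rev size_belast.
- exact: pw_rev Hws H.
Qed.

Lemma PPord a X A1 A2 C1 C2 : path e a X -> size X <= 2 * i + 1 ->
  p = A1 ++ A2 -> last x A1 = a -> p = C1 ++ C2 -> last x C1 = last a X ->
  size A1 <= size C1 -> odd (pw a X) = phiP a (+) phiP (last a X).
Proof.
move=> PX SX EA LA EC LC Hs.
have [M [E1 E2]] := common_prefix (etrans (esym EA) EC) Hs.
have LM : last a M = last a X by rewrite -LC E1 last_cat LA.
have PM : path e a M.
  by move: HP; rewrite EA E2 cat_path LA => /andP[_]; rewrite cat_path => /andP[].
have PC2 : path e (last a X) C2.
  by move: HP; rewrite EC cat_path LC => /andP[].
have PA1 : path e x A1 by move: HP; rewrite EA cat_path => /andP[].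
have Hle : pw a M <= pw a X.
  have P' : path e x (A1 ++ X ++ C2) by rewrite !cat_path PA1 LA PX PC2.
  have L' : last x (A1 ++ X ++ C2) = last x p by rewrite !last_cat LA EC last_cat LC.
  have := MinW Hx P'; rewrite L' => /(_ Hy).
  rewrite !pw_cat LA {1}EA E2 !pw_cat LA LM; lia.
have := pw_bounds Hwb PX => /andP[_ b1].
have [R1 R2 R3 R4] := rev_walk_props PM.
have Hev : ~~ odd (pw a (X ++ rev (belast a M))).
  apply: (closed_even_short Hirr Hws Hcyc).
  - by rewrite cat_path PX -LM R1.
  - by rewrite last_cat -LM R2.
  - rewrite pw_cat -LM R4; lia.
have Ha : phiP a = odd (pw x A1) by rewrite -LA (phiP_split EA).
have Hb : phiP (last a X) = odd (pw x C1) by rewrite -LC (phiP_split EC).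
rewrite Ha Hb E1 pw_cat LA.
move: Hev; rewrite pw_cat -LM R4 !oddD.
by case: (odd (pw a X)); case: (odd (pw a M)); case: (odd (pw x A1)).
Qed.


Lemma PP a X : path e a X -> size X <= 2 * i + 1 -> a \in x :: p -> last a X \in x :: p ->
  odd (pw a X) = phiP a (+) phiP (last a X).
Proof.
move=> PX SX Ha Hb.
have [A1 [A2 [EA LA]]] := split_at Ha.
have [C1 [C2 [EC LC]]] := split_at Hb.
case: (leqP (size A1) (size C1)) => Hs; first exact: PPord PX SX EA LA EC LC Hs.
have [R1 R2 R3 R4] := rev_walk_props PX.
have := PPord R1 _ EC LC EA _ (ltnW Hs).
rewrite R2 R3 R4 => /(_ SX LA) ->; exact: addbC.
Qed.

Lemma PB1 a X : path e a X -> size X <= 2 * i + 1 -> a \in x :: p -> last a X \in B1 ->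
  odd (pw a X) = phiP a (+) phi1 (last a X).
Proof.
move=> PX SX Ha Hb.
have [A1 [A2 [EA LA]]] := split_at Ha.
have PA1 : path e x A1 by move: HP; rewrite EA cat_path => /andP[].
have PA2 : path e a A2 by move: HP; rewrite EA cat_path LA => /andP[].
have [R1 R2 R3 R4] := rev_walk_props PX.
have Hle : pw x A1 <= pw a X.
  have P' : path e (last a X) (rev (belast a X) ++ A2) by rewrite cat_path R1 R2.
  have L' : last (last a X) (rev (belast a X) ++ A2) = last x p.
    by rewrite last_cat R2 EA last_cat LA.
  have := MinW Hb P'; rewrite L' => /(_ Hy).
  by rewrite pw_cat R2 R4 {1}EA pw_cat LA leq_add2r.
have := side Hsym Hwb Hphi1 Hx PA1 LA PX (erefl _) Hb SX Hle.
rewrite Hphi1x -LA (phiP_split EA) LA oddD.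
by case: (odd (pw x A1)); case: (odd (pw a X)); case: (phi1 _).
Qed.

Lemma PB2 a X : path e a X -> size X <= 2 * i + 1 -> a \in x :: p -> last a X \in B2 ->
  odd (pw a X) = phiP a (+) phi2 (last a X).
Proof.
move=> PX SX Ha Hb.
have [A1 [A2 [EA LA]]] := split_at Ha.
have PA1 : path e x A1 by move: HP; rewrite EA cat_path => /andP[].
have PA2 : path e a A2 by move: HP; rewrite EA cat_path LA => /andP[].
have [R1 R2 R3 R4] := rev_walk_props PA2.
have Ly : last a A2 = last x p by rewrite EA last_cat LA.
have Hle : pw a A2 <= pw a X.
  have P' : path e x (A1 ++ X) by rewrite cat_path PA1 LA PX.
  have := MinW Hx P'; rewrite last_cat LA => /(_ Hb).
  by rewrite pw_cat LA {1}EA pw_cat LA leq_add2l.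
have := side Hsym Hwb Hphi2 (r := last a A2) _ R1 R2 PX (erefl _) Hb SX.
rewrite R4 => /(_ _ Hle); rewrite Ly Hphi2y => /(_ Hy).
rewrite -LA (phiP_split EA) LA EA pw_cat LA !oddD.
by case: (odd (pw x A1)); case: (odd (pw a X)); case: (odd (pw a A2)); case: (phi2 _).
Qed.

Lemma BB1 a X : path e a X -> size X <= 2 * i + 1 -> last a X \in B1 ->
  odd (pw a X) = phi1 a (+) phi1 (last a X).
Proof.
move=> PX SX Hb; apply: Hphi1 => //.
apply: (X_in_nbhd Hsym PX Hb); exact: ar1 SX.
Qed.

Lemma BB2 a X : path e a X -> size X <= 2 * i + 1 -> last a X \in B2 ->
  odd (pw a X) = phi2 a (+) phi2 (last a X).
Proof.
move=> PX SX Hb; apply: Hphi2 => //.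
apply: (X_in_nbhd Hsym PX Hb); exact: ar1 SX.
Qed.

Definition phi v := if v \in x :: p then phiP v else if v \in B1 then phi1 v else phi2 v.

Lemma Phi a X : path e a X -> size X <= 2 * i + 1 ->
  [\/ a \in B1, a \in B2 | a \in x :: p] ->
  [\/ last a X \in B1, last a X \in B2 | last a X \in x :: p] ->
  odd (pw a X) = phi a (+) phi (last a X).
Proof.
move=> PX SX Ha Hb.
have [R1 R2 R3 R4] := rev_walk_props PX.
have SR : size (rev (belast a X)) <= 2 * i + 1 by rewrite R3.
rewrite /phi.
case: (boolP (a \in x :: p)) => Pa; case: (boolP (last a X \in x :: p)) => Pb.
- exact: PP.
- case: (boolP (last a X \in B1)) => Hb1; first exact: PB1.
  by apply: PB2 => //; case: Hb Hb1 Pb => ->.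
- case: (boolP (a \in B1)) => Ha1.
    by rewrite -R4 (PB1 R1 SR Pb) R2 // addbC.
  have Ha2 : a \in B2 by case: Ha Ha1 Pa => ->.
  by rewrite -R4 (PB2 R1 SR Pb) R2 // addbC.
- have Hb' : (last a X \in B1) || (last a X \in B2) by case: Hb Pb => ->; rewrite ?orbT.
  have Ha' : (a \in B1) || (a \in B2) by case: Ha Pa => ->; rewrite ?orbT.
  case: (boolP (a \in B1)) => Ha1; case: (boolP (last a X \in B1)) => Hb1.
  + exact: BB1.
  + have Hb2 : last a X \in B2 by move: Hb'; rewrite (negbTE Hb1).
    by case: (ar2 (DistW Ha1 PX Hb2) SX).
  + have Ha2 : a \in B2 by move: Ha'; rewrite (negbTE Ha1).
    have := DistW Hb1 R1; rewrite R2 R3 => /(_ Ha2) H; by case: (ar2 H SX).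
  + have Hb2 : last a X \in B2 by move: Hb'; rewrite (negbTE Hb1).
    exact: BB2.
Qed.

Definition SA v := [\/ v \in B1, v \in B2 | v \in x :: p].

Lemma anchor_ex v : exists sq : T * seq T, nbhd e i SA v ->
  [/\ SA sq.1, path e sq.1 sq.2, last sq.1 sq.2 = v & size sq.2 <= i].
Proof.
case: (excluded_middle_informative (nbhd e i SA v)) => [[s [Hs [q [Pq [Lq Sq]]]]]|N].
  by exists (s, q).
by exists (v, [::]) => /N.
Qed.

Definition anc v := proj1_sig (constructive_indefinite_description _ (anchor_ex v)).
Lemma ancP v : nbhd e i SA v ->
  [/\ SA (anc v).1, path e (anc v).1 (anc v).2, last (anc v).1 (anc v).2 = v & size (anc v).2 <= i].
Proof. exact: (proj2_sig (constructive_indefinite_description _ (anchor_ex v))). Qed.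

Definition psi v := phi (anc v).1 (+) odd (pw (anc v).1 (anc v).2).

Lemma edge_par u v : nbhd e i SA u -> nbhd e i SA v -> e u v -> odd (w u v) = psi u (+) psi v.
Proof.
move=> /ancP [Au Pu Lu Su] /ancP [Av Pv Lv Sv] euv.
rewrite /psi.
move: Au Pu Lu Su Av Pv Lv Sv; case: (anc u) => su qu; case: (anc v) => sv qv /=.
move=> Au Pu Lu Su Av Pv Lv Sv.
have [R1 R2 R3 R4] := rev_walk_props Pv.
rewrite Lv in R1 R2 R4.
have PW : path e su (rcons qu v ++ rev (belast sv qv)).
  by rewrite cat_path rcons_path Pu Lu euv last_rcons R1.
have LW : last su (rcons qu v ++ rev (belast sv qv)) = sv by rewrite last_cat last_rcons R2.
have SW : size (rcons qu v ++ rev (belast sv qv)) <= 2 * i + 1.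
  by rewrite size_cat size_rcons R3; exact: ar3 Su Sv.
have := Phi PW SW Au; rewrite LW => /(_ Av).
rewrite pw_cat pw_rcons last_rcons R4 Lu !oddD => H.
move: H; case: (odd (pw su qu)); case: (odd (w u v)); case: (odd (pw sv qv));
  case: (phi su); case: (phi sv) => //.
Qed.

Lemma walk_par a q : path e a q -> (forall v, v \in a :: q -> nbhd e i SA v) ->
  odd (pw a q) = psi a (+) psi (last a q).
Proof.
elim: q a => [|b q IH] a /=.
  by move=> _ _; rewrite pw_nil addbb.
case/andP=> eab Pq HS.
rewrite pw_cons oddD (edge_par _ _ eab) ?IH //.
- by case: (psi a); case: (psi b); case: (psi (last b q)).
- by move=> v hv; apply: HS; rewrite in_cons hv orbT.
- by apply: HS; rewrite mem_head.
- by apply: HS; rewrite !in_cons eqxx orbT.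
Qed.

Lemma final : weighted_bipartite e w (nbhd e i SA).
Proof.
move=> c [Sc [Uc Cc]] Hin.
case: c Sc Uc Cc Hin => [|c0 cs] // Sc Uc Cc Hin.
rewrite cycle_weight_pw //.
rewrite (walk_par Cc) ?last_rcons ?addbb //.
move=> v; rewrite in_cons mem_rcons in_cons orbA orbb => Hv.
by apply: Hin; rewrite in_cons.
Qed.

End Main.

Unset Implicit Arguments.
Theorem corollary4p4 (T : finType) (e : rel T) (w : T -> T -> nat)
    (i k : nat) (B1 B2 : {set T}) (x : T) (p : seq T) :
  1 <= i -> 10 * i + 35 <= k ->
  simple_graph e -> weight_345 e w ->
  (forall c, is_cycle e c -> odd (cycle_weight w c) -> 2 * k + 1 <= cycle_weight w c) ->
  dist_ge e B1 B2 (2 * i + 2) ->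
  min_weight_path e w B1 B2 x p ->
  weighted_bipartite e w (nbhd e (3 * i + 1) (fun v => v \in B1)) ->
  weighted_bipartite e w (nbhd e (3 * i + 1) (fun v => v \in B2)) ->
  weighted_bipartite e w
    (nbhd e i (fun v => [\/ v \in B1, v \in B2 | v \in x :: p])).
Proof.
move=> Hi Hk [Hsym Hirr] Hw Hcyc Hdist [Hx [HP HU] Hy Hmin] Hb1 Hb2.
have Hws : forall a b, e a b -> w a b = w b a by move=> a b /Hw [].
have Hwb : forall a b, e a b -> 3 <= w a b <= 5.
  by move=> a b /Hw [_]; rewrite !inE => /or3P[]/eqP->.
have [f1 Hf1] := potential Hsym Hirr Hws Hb1.
have [f2 Hf2] := potential Hsym Hirr Hws Hb2.
apply: (@final T e w i k B1 B2 x p Hsym Hirr Hws Hwb Hk Hcyc Hdist Hx HP HU Hy Hmin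
          (fun v => f1 v (+) f1 x) (fun v => f2 v (+) f2 (last x p) (+) odd (path_weight w x p))).
- move=> a q Pq HQ; rewrite (Hf1 a q Pq HQ).
  by case: (f1 a); case: (f1 x); case: (f1 (last a q)).
- by rewrite addbb.
- move=> a q Pq HQ; rewrite (Hf2 a q Pq HQ).
  by case: (f2 a); case: (f2 (last x p)); case: (f2 (last a q)); case: (odd _).
- by rewrite addbb.
Qed.
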